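(* Let $\Omega$ be a pointed solid closed convex cone in a finite-dimensional real inner product space $X$ with $\Omega^*$ facially compact and locally smooth, $1\le j\le d$, and $(E,F)\in\mathcal P_j$. Then the orthogonal projection $p$ of $X$ onto $E_{1/2}(F)$ is injective on some neighbourhood of $e_F(E)$ in $\mathbf e(\xi^{-1}(E))=\{e_G(E):(E,G)\in\mathcal P_j\}$.
   Context: $A^*=\{y:\langle y,a\rangle\ge0\ \forall a\in A\}$, $A^\circledast=A^*\cap\operatorname{span}A$. Faces: subsets $F$ of a convex set such that every segment with midpoint in $F$ lies in $F$. $0=n_0<\dots<n_d=\dim X$ are the dimensions of faces of $\Omega^*$, $P_j$ the faces of dimension $n_{d-j}$ with the Fell topology; facially compact: each $P_j$ compact. Modular face of a cone $C$: a face $E$ containing a face of dimension $\max\{\dim G:G\text{ face of }C,\dim G<\dim E\}$; smooth: the relative interiors of those maximal-dimensional proper faces consist of regular points of $E$; locally smooth: all modular faces smooth. $\mathcal P_j=\{(E,F)\in P_{j-1}\times P_j:E\supset F\}$, $\xi(E,F)=E$; $e_F(E)$ is the unit generator of the extreme ray $F^\perp\cap E^\circledast$ of $E^\circledast$; $E_{1/2}(F)=\operatorname{span}(E)\cap F^\perp\cap e_F(E)^\perp$. *)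

(* Defs.v *)
(* X = 'rV[R]_n with the standard
   inner product (every finite-dimensional real inner product space is
   isometric to such a space). *)
From mathcomp Require Import all_boot all_order all_algebra.
From mathcomp Require Import all_classical all_reals all_analysis.
Import Order.TTheory GRing.Theory Num.Theory.
Import numFieldNormedType.Exports.
Set Implicit Arguments.
Unset Strict Implicit.
Unset Printing Implicit Defensive.
Local Open Scope ring_scope.
Local Open Scope classical_set_scope.

Definition dot (R : realType) (n : nat) (u v : 'rV[R]_n) : R := (u *m v^T) 0 0.

Definition span (R : realType) (n : nat) (S : set 'rV[R]_n) : set 'rV[R]_n :=
  [set v | exists (k : nat) (c : 'I_k -> R) (w : 'I_k -> 'rV[R]_n),
      (forall i, S (w i)) /\ v = \sum_(i < k) c i *: w i].

Definition has_dim (R : realType) (n : nat) (S : set 'rV[R]_n) (k : nat) : Prop :=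
  exists A : 'M[R]_(k, n), (forall i, S (row i A)) /\ \rank A = k /\
     (forall v, S v -> (v <= A)%MS).

Definition dimS (R : realType) (n : nat) (S : set 'rV[R]_n) : nat :=
  xget 0%N [set k | has_dim S k].

Definition convex_set (R : realType) (n : nat) (S : set 'rV[R]_n) : Prop :=
  forall x y (t : R), S x -> S y -> 0 <= t -> t <= 1 -> S (t *: x + (1 - t) *: y).

Definition convex_cone (R : realType) (n : nat) (S : set 'rV[R]_n) : Prop :=
  S 0 /\ (forall x y, S x -> S y -> S (x + y)) /\
  (forall (t : R) x, 0 <= t -> S x -> S (t *: x)).

Definition pointed_set (R : realType) (n : nat) (S : set 'rV[R]_n) : Prop :=
  forall x, S x -> S (- x) -> x = 0.

Definition solid (R : realType) (n : nat) (S : set 'rV[R]_n) : Prop :=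
  (S°) !=set0.

Definition is_face (R : realType) (n : nat) (C F : set 'rV[R]_n) : Prop :=
  F `<=` C /\ F !=set0 /\ convex_set F /\
  forall x y, C x -> C y -> F ((2^-1 : R) *: (x + y)) ->
    forall t : R, 0 <= t -> t <= 1 -> F (t *: x + (1 - t) *: y).

Definition dual (R : realType) (n : nat) (A : set 'rV[R]_n) : set 'rV[R]_n :=
  [set y | forall a, A a -> 0 <= dot y a].
Definition dualspan (R : realType) (n : nat) (A : set 'rV[R]_n) : set 'rV[R]_n :=
  dual A `&` span A.
Definition perp (R : realType) (n : nat) (A : set 'rV[R]_n) : set 'rV[R]_n :=
  [set y | forall a, A a -> dot y a = 0].

(* the increasing list 0 = n_0 < ... < n_d of dimensions of faces of C *)
Definition face_dims (R : realType) (n : nat) (C : set 'rV[R]_n) : seq nat :=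
  [seq k <- iota 0 n.+1 | `[< exists G, is_face C G /\ dimS G = k >] ].
Definition dd (R : realType) (n : nat) (C : set 'rV[R]_n) : nat :=
  (size (face_dims C)).-1.
Definition ndim (R : realType) (n : nat) (C : set 'rV[R]_n) (i : nat) : nat :=
  nth 0%N (face_dims C) i.

Definition Pj (R : realType) (n : nat) (C : set 'rV[R]_n) (j : nat)
  : set (set 'rV[R]_n) :=
  [set G | is_face C G /\ dimS G = ndim C (dd C - j)].

Definition calP (R : realType) (n : nat) (C : set 'rV[R]_n) (j : nat)
  : set (set 'rV[R]_n * set 'rV[R]_n) :=
  [set EF | Pj C j.-1 EF.1 /\ Pj C j EF.2 /\ EF.2 `<=` EF.1].

Definition fell_subbasic (R : realType) (n : nat) (S : set (set 'rV[R]_n)) : Prop :=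
  (exists K : set 'rV[R]_n, compact K /\ S = [set A | A `&` K = set0]) \/
  (exists U : set 'rV[R]_n, open U /\ S = [set A | A `&` U !=set0]).

Definition fell_open (R : realType) (n : nat) (O : set (set 'rV[R]_n)) : Prop :=
  forall A, O A -> exists (k : nat) (S : 'I_k -> set (set 'rV[R]_n)),
    (forall i, fell_subbasic (S i)) /\ (forall i, S i A) /\
    (forall B, (forall i, S i B) -> O B).

Definition fell_compact (R : realType) (n : nat) (P : set (set 'rV[R]_n)) : Prop :=
  forall (I : Type) (O : I -> set (set 'rV[R]_n)),
    (forall i, fell_open (O i)) -> (forall A, P A -> exists i, O i A) ->
    exists (k : nat) (f : 'I_k -> I), forall A, P A -> exists m, O (f m) A.

Definition facially_compact (R : realType) (n : nat) (C : set 'rV[R]_n) : Prop :=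
  forall j, (j <= dd C)%N -> fell_compact (Pj C j).

(* relative interior of a convex set G (in its affine = linear span, G a cone face) *)
Definition relint (R : realType) (n : nat) (G : set 'rV[R]_n) : set 'rV[R]_n :=
  [set x | G x /\ exists eps : R, 0 < eps /\
     forall y, span G y -> dot (y - x) (y - x) < eps -> G y].

(* regular point of a cone E: E has a unique supporting hyperplane at x
   (inside span E), i.e. the normal cone {y in E^⊛ | <y,x> = 0} is one ray *)
Definition regular (R : realType) (n : nat) (E : set 'rV[R]_n) (x : 'rV[R]_n) : Prop :=
  E x /\ exists u : 'rV[R]_n, u != 0 /\
    forall y, (dualspan E y /\ dot y x = 0) <-> exists t : R, 0 <= t /\ y = t *: u.

Definition modular (R : realType) (n : nat) (C E : set 'rV[R]_n) : Prop :=
  is_face C E /\ exists G, is_face C G /\ G `<=` E /\ (dimS G < dimS E)%N /\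
    forall G', is_face C G' -> (dimS G' < dimS E)%N -> (dimS G' <= dimS G)%N.

Definition max_proper_face (R : realType) (n : nat) (E G : set 'rV[R]_n) : Prop :=
  is_face E G /\ G <> E /\
  forall G', is_face E G' -> G' <> E -> (dimS G' <= dimS G)%N.

Definition smooth (R : realType) (n : nat) (E : set 'rV[R]_n) : Prop :=
  forall G, max_proper_face E G -> forall x, relint G x -> regular E x.

Definition locally_smooth (R : realType) (n : nat) (C : set 'rV[R]_n) : Prop :=
  forall E, modular C E -> smooth E.

Definition eF (R : realType) (n : nat) (E F : set 'rV[R]_n) : 'rV[R]_n :=
  xget 0 [set e | dot e e = 1 /\
    forall y, (perp F y /\ dualspan E y) <-> exists t : R, 0 <= t /\ y = t *: e].

Definition Ehalf (R : realType) (n : nat) (E F : set 'rV[R]_n) : set 'rV[R]_n :=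
  [set v | span E v /\ perp F v /\ dot v (eF E F) = 0].

Definition oproj (R : realType) (n : nat) (V : set 'rV[R]_n) (x : 'rV[R]_n) : 'rV[R]_n :=
  xget 0 [set p | V p /\ forall v, V v -> dot (x - p) v = 0].

Definition eset (R : realType) (n : nat) (C : set 'rV[R]_n) (j : nat) (E : set 'rV[R]_n)
  : set 'rV[R]_n :=
  [set eF E G | G in [set G | calP C j (E, G)]].

(* Main.v *)
Require Import Defs.
From mathcomp Require Import all_boot all_order all_algebra.
From mathcomp Require Import all_classical all_reals all_analysis.
From mathcomp Require Import lra zify.
Import Order.TTheory GRing.Theory Num.Theory.
Import numFieldNormedType.Exports.
Set Implicit Arguments.
Unset Strict Implicit.
Unset Printing Implicit Defensive.
Local Open Scope ring_scope.
Local Open Scope classical_set_scope.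

Lemma dotE (R : realType) (n : nat) (u v : 'rV[R]_n) :
  dot u v = \sum_j u 0 j * v 0 j.
Proof. by rewrite /dot !mxE; apply: eq_bigr => j _; rewrite !mxE. Qed.

Lemma dotC (R : realType) (n : nat) (u v : 'rV[R]_n) : dot u v = dot v u.
Proof. by rewrite !dotE; apply: eq_bigr => j _; rewrite mulrC. Qed.

Lemma dotDl (R : realType) (n : nat) (u v w : 'rV[R]_n) :
  dot (u + v) w = dot u w + dot v w.
Proof. by rewrite !dotE -big_split; apply: eq_bigr => j _; rewrite !mxE mulrDl. Qed.

Lemma dotZl (R : realType) (n : nat) (a : R) (u w : 'rV[R]_n) :
  dot (a *: u) w = a * dot u w.
Proof. by rewrite !dotE mulr_sumr; apply: eq_bigr => j _; rewrite !mxE mulrA. Qed.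

Lemma dotNl (R : realType) (n : nat) (u w : 'rV[R]_n) : dot (- u) w = - dot u w.
Proof. by rewrite -scaleN1r dotZl mulN1r. Qed.

Lemma dotBl (R : realType) (n : nat) (u v w : 'rV[R]_n) :
  dot (u - v) w = dot u w - dot v w.
Proof. by rewrite dotDl dotNl. Qed.

Lemma dot0l (R : realType) (n : nat) (w : 'rV[R]_n) : dot 0 w = 0.
Proof. by rewrite dotE big1 // => j _; rewrite mxE mul0r. Qed.

Lemma dotDr (R : realType) (n : nat) (u v w : 'rV[R]_n) :
  dot w (u + v) = dot w u + dot w v.
Proof. by rewrite dotC dotDl !(dotC w). Qed.
Lemma dotZr (R : realType) (n : nat) (a : R) (u w : 'rV[R]_n) :
  dot w (a *: u) = a * dot w u.
Proof. by rewrite dotC dotZl dotC. Qed.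
Lemma dotBr (R : realType) (n : nat) (u v w : 'rV[R]_n) :
  dot w (u - v) = dot w u - dot w v.
Proof. by rewrite dotC dotBl !(dotC w). Qed.
Lemma dot0r (R : realType) (n : nat) (w : 'rV[R]_n) : dot w 0 = 0.
Proof. by rewrite dotC dot0l. Qed.

Lemma dot_suml (R : realType) (n k : nat) (c : 'I_k -> R) (w : 'I_k -> 'rV[R]_n) v :
  dot (\sum_(i < k) c i *: w i) v = \sum_(i < k) c i * dot (w i) v.
Proof.
elim/big_rec2: _ => [|i y1 y2 _ <-]; first by rewrite dot0l.
by rewrite dotDl dotZl.
Qed.

Lemma dot_ge0 (R : realType) (n : nat) (v : 'rV[R]_n) : 0 <= dot v v.
Proof. by rewrite dotE sumr_ge0 // => j _; rewrite -expr2 sqr_ge0. Qed.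

Lemma dot_eq0 (R : realType) (n : nat) (v : 'rV[R]_n) : dot v v = 0 -> v = 0.
Proof.
rewrite dotE => /eqP; rewrite psumr_eq0; last by move=> j _; rewrite -expr2 sqr_ge0.
move=> /allP H; apply/rowP => j; rewrite mxE.
by have := H j (mem_index_enum j); rewrite mulf_eq0 orbb => /eqP.
Qed.

Lemma coord_le_norm (R : realType) (n : nat) (v : 'rV[R]_n) j : `|v 0 j| <= `|v|.
Proof.
change (`|v 0 j| <= mx_norm v); rewrite mx_normrE.
exact: (le_bigmax 0 (fun ij : 'I_1 * 'I_n => `|v ij.1 ij.2|) (0, j)).
Qed.

Lemma dot_abs_le (R : realType) (n : nat) (u v : 'rV[R]_n) :
  `|dot u v| <= n%:R * (`|u| * `|v|).
Proof.
rewrite dotE (le_trans (ler_norm_sum _ _ _)) //.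
have -> : n%:R * (`|u| * `|v|) = \sum_(j < n) (`|u| * `|v|).
  by rewrite sumr_const card_ord mulr_natl.
apply: ler_sum => j _.
by rewrite normrM ler_pM ?coord_le_norm.
Qed.

Lemma sq_le_dot (R : realType) (n : nat) (v : 'rV[R]_n) j : v 0 j ^+ 2 <= dot v v.
Proof.
rewrite dotE (bigD1 j) //= -expr2 lerDl sumr_ge0 // => i _.
by rewrite -expr2 sqr_ge0.
Qed.

Lemma dot1_norm (R : realType) (n : nat) (v : 'rV[R]_n) : dot v v = 1 -> `|v| <= 1.
Proof.
move=> H1; change (mx_norm v <= 1).
have [->|/mx_norm_neq0 [[i j] Hij]] := eqVneq (mx_norm v) 0; first by [].
rewrite Hij /=.
have := sq_le_dot v j; rewrite H1 (ord1 i) => H.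
by rewrite -(@ler_pXn2r _ 2) ?nnegrE ?normr_ge0 // expr1n real_normK ?num_real.
Qed.

Lemma dot_le_norm (R : realType) (n : nat) (v : 'rV[R]_n) : dot v v <= n%:R * `|v| ^+ 2.
Proof.
have := dot_abs_le v v; rewrite ger0_norm ?dot_ge0 // expr2 //.
Qed.

Lemma dot_contl (R : realType) (n : nat) (f g : 'rV[R]_n -> 'rV[R]_n) :
  continuous f -> continuous g -> continuous (fun v => dot (f v) (g v)).
Proof.
move=> cf cg.
have -> : (fun v => dot (f v) (g v)) = (fun v => \sum_(j < n) (f v 0 j * g v 0 j)).
  by apply/funext => v; rewrite dotE.
apply: continuous_big => [[x y]|j _].
  exact: (@add_continuous R^o (x, y)).
move=> x; apply: continuousM.
  exact: (continuous_comp (cf x) (@coord_continuous _ _ _ 0 j (f x))).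
exact: (continuous_comp (cg x) (@coord_continuous _ _ _ 0 j (g x))).
Qed.

Lemma dot_cont (R : realType) (n : nat) (w : 'rV[R]_n) : continuous (fun v => dot v w).
Proof.
apply: (@dot_contl R n id (fun=> w)); first by move=> x; exact: (@cvg_id _ (nbhs x)).
move=> x; apply: cvg_cst. 
exact: nbhs_filter.
Qed.

Lemma dot_cont2 (R : realType) (n : nat) : continuous (fun v : 'rV[R]_n => dot v v).
Proof. by apply: (@dot_contl R n id id) => x; exact: (@cvg_id _ (nbhs x)). Qed.

Lemma span_mx (R : realType) (n k : nat) (S : set 'rV[R]_n) (A : 'M[R]_(k, n)) :
  (forall i, S (row i A)) -> (forall v, S v -> (v <= A)%MS) ->
  forall v, Defs.span S v <-> (v <= A)%MS.
Proof.
move=> rA SA v; split.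
  move=> [m [c [w [Sw ->]]]]; apply: summx_sub => i _.
  by apply: scalemx_sub; exact: SA.
move=> /submxP [u ->]; exists k, (fun i => u 0 i), (fun i => row i A); split => //.
exact: mulmx_sum_row.
Qed.

Lemma span_sub (R : realType) (n : nat) (S : set 'rV[R]_n) v : S v -> Defs.span S v.
Proof.
move=> Sv; exists 1%N, (fun=> 1), (fun=> v); split => //.
by rewrite big_ord1 scale1r.
Qed.

Lemma has_dim_ex (R : realType) (n : nat) (S : set 'rV[R]_n) : exists k, has_dim S k.
Proof.
pose P k := `[< exists A : 'M[R]_(k, n), (forall i, S (row i A)) /\ \rank A = k >].
have P0 : P 0%N.
  by apply/asboolP; exists 0; split => [[]|]; rewrite ?mxrank0.
have Pn : forall k, P k -> (k <= n)%N.
  by move=> k /asboolP [A [_ <-]]; exact: rank_leq_col.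
have exP : exists k, P k by exists 0%N.
case: (ex_maxnP exP Pn) => k /asboolP [A [rA rkA]] kmax.
exists k, A; split => //; split => // v Sv.
apply/negP => vA.
have : P (k + 1)%N.
  apply/asboolP; exists (col_mx A v); split.
    move=> i; case: (splitP i) => [i' Hi|i' Hi].
      have -> : i = lshift 1 i' by apply/val_inj.
      by rewrite rowKu.
    have -> : i = rshift k i' by apply/val_inj.
    by rewrite rowKd (ord1 i') row_id.
  apply/eqP; rewrite eqn_leq rank_leq_row /= -addsmxE.
  have [H1 H2] := mxrank_leqif_sup (addsmxSl A v).
  move: H1; rewrite leq_eqVlt => /orP [E|]; last by rewrite rkA addn1.
  exfalso; apply: vA; move: E; rewrite H2 addsmx_sub => /andP [] //.
by move/kmax; rewrite addn1 ltnn.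
Qed.

Lemma has_dim_uniq (R : realType) (n : nat) (S : set 'rV[R]_n) k1 k2 :
  has_dim S k1 -> has_dim S k2 -> k1 = k2.
Proof.
have H : forall a b, has_dim S a -> has_dim S b -> (a <= b)%N.
  move=> a b [A [rA [rkA SA]]] [B [rB [rkB SB]]].
  rewrite -rkA -rkB; apply: mxrankS; apply/row_subP => i; exact: SB.
by move=> h1 h2; apply/eqP; rewrite eqn_leq !H.
Qed.

Lemma dimS_spec (R : realType) (n : nat) (S : set 'rV[R]_n) : has_dim S (dimS S).
Proof. by rewrite /dimS; apply: xgetPex; exact: has_dim_ex. Qed.

Lemma dimS_eq (R : realType) (n : nat) (S : set 'rV[R]_n) k : has_dim S k -> dimS S = k.
Proof. by move=> h; apply: has_dim_uniq (dimS_spec S) h. Qed.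

Lemma dimS_le (R : realType) (n : nat) (S T : set 'rV[R]_n) :
  S `<=` T -> (dimS S <= dimS T)%N.
Proof.
move=> ST; have [A [rA [rkA SA]]] := dimS_spec S.
have [B [rB [rkB SB]]] := dimS_spec T.
rewrite -rkA -rkB; apply: mxrankS; apply/row_subP => i; apply: SB; exact: ST.
Qed.

Lemma dimS_le_n (R : realType) (n : nat) (S : set 'rV[R]_n) : (dimS S <= n)%N.
Proof. have [A [_ [rkA _]]] := dimS_spec S; rewrite -rkA; exact: rank_leq_col. Qed.

Lemma dot_row (R : realType) (n k : nat) (v : 'rV[R]_n) (A : 'M[R]_(k, n)) i :
  dot v (row i A) = (v *m A^T) 0 i.
Proof. by rewrite dotE !mxE; apply: eq_bigr => j _; rewrite !mxE. Qed.

Lemma perp_mx (R : realType) (n k : nat) (S : set 'rV[R]_n) (A : 'M[R]_(k, n)) :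
  (forall i, S (row i A)) -> (forall v, S v -> (v <= A)%MS) ->
  forall v, perp S v <-> v *m A^T = 0.
Proof.
move=> rA SA v; split.
  by move=> H; apply/rowP => i; rewrite [RHS]mxE -dot_row; exact: H (rA i).
move=> H a /SA /submxP [c ->].
by rewrite /dot trmx_mul mulmxA H mul0mx mxE.
Qed.

Lemma dot_mx (R : realType) (n : nat) (u v : 'rV[R]_n) : dot u v = (u *m v^T) 0 0.
Proof. by []. Qed.

Lemma oproj_ex (R : realType) (n r : nat) (V : set 'rV[R]_n) (M : 'M[R]_(r, n)) x :
  (forall v, V v <-> (v <= M)%MS) ->
  exists p, V p /\ forall v, V v -> dot (x - p) v = 0.
Proof.
move=> VM.
move: (row_base_free M) (eq_row_base M); move: (row_base M) => B fB eqB.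
set G := B *m B^T.
have Gu : G \in unitmx.
  rewrite -row_free_unit -kermx_eq0; apply/eqP/row_matrixP => i.
  set c := row i (kermx G).
  have cG : c *m G = 0 by rewrite /c -row_mul mulmx_ker row0.
  have : c *m B = 0.
    apply: dot_eq0; rewrite dot_mx trmx_mul mulmxA -(mulmxA c) -/G cG.
    by rewrite mul0mx mxE.
  move/eqP; rewrite (mulmx_free_eq0 _ fB) => /eqP ->; by rewrite row0.
exists (x *m B^T *m invmx G *m B); split.
  by apply/VM; rewrite (submx_trans (submxMl _ _)) // eqB.
have H0 : (x - x *m B^T *m invmx G *m B) *m B^T = 0.
  by rewrite mulmxBl -(mulmxA _ B) -/G -(mulmxA (x *m B^T) (invmx G) G) mulVmx // mulmx1 subrr.
move=> v /VM; rewrite -eqB => /submxP [c ->].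
by rewrite dot_mx trmx_mul mulmxA H0 mul0mx mxE.
Qed.

Lemma oproj_spec (R : realType) (n r : nat) (V : set 'rV[R]_n) (M : 'M[R]_(r, n)) x :
  (forall v, V v <-> (v <= M)%MS) ->
  V (oproj V x) /\ forall v, V v -> dot (x - oproj V x) v = 0.
Proof. by move=> VM; exact: (xgetPex 0 (oproj_ex x VM)). Qed.

Lemma dual_cone (R : realType) (n : nat) (O : set 'rV[R]_n) : convex_cone (Defs.dual O).
Proof.
split; first by move=> a _; rewrite dot0l.
split; first by move=> x y Hx Hy a Oa; rewrite dotDl addr_ge0 ?Hx ?Hy.
by move=> t x t0 Hx a Oa; rewrite dotZl mulr_ge0 ?Hx.
Qed.

Lemma exists_pow2 (R : realType) (s : R) : exists m : nat, s <= 2 ^+ m.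
Proof.
exists (Num.trunc s).+1; apply: (le_trans (ltW (truncnS_gt s))).
rewrite -natrX ler_nat; apply: ltnW; exact: ltn_expl.
Qed.

Lemma face_cone (R : realType) (n : nat) (C G : set 'rV[R]_n) :
  convex_cone C -> is_face C G -> convex_cone G.
Proof.
move=> [C0 [CD CZ]] [GC [[g Gg] [cvG mid]]].
have G0 : G 0.
  have hm : G (2^-1 *: (0 + 2 *: g)).
    by rewrite add0r scalerA mulVf ?scale1r // pnatr_eq0.
  have := mid 0 (2 *: g) C0 (CZ _ _ (ler0n _ 2) (GC _ Gg)) hm 1 ler01 (lexx _).
  by rewrite subrr scale0r scaler0 addr0.
have Gsc : forall m (s : R) x, G x -> 0 <= s -> s <= 2 ^+ m -> G (s *: x).
  elim=> [|m IH] s x Gx s0 sm.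
    have := cvG x 0 s Gx G0 s0; rewrite expr0 in sm.
    by rewrite scaler0 addr0; apply.
  have Hh : G ((s / 2) *: x).
    apply: IH => //; first by rewrite divr_ge0.
    by rewrite ler_pdivrMr // -exprSr.
  have := mid (s *: x) 0 (CZ _ _ s0 (GC _ Gx)) C0.
  rewrite addr0 scalerA mulrC => /(_ Hh 1 ler01 (lexx _)).
  by rewrite subrr scale0r scale1r addr0.
split => //; split.
  move=> x y Gx Gy.
  have Hh : G ((2^-1 : R) *: (x + y)).
    have := cvG x y (2^-1) Gx Gy; rewrite invr_ge0 ler0n.
    have -> : (1 - 2^-1 : R) = 2^-1 by rewrite {1}(splitr 1) mul1r addrK.
    rewrite scalerDr; apply => //; rewrite invf_le1 ?ler1n //.
  have := mid (x + y) 0 (CD _ _ (GC _ Gx) (GC _ Gy)) C0.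
  rewrite addr0 => /(_ Hh 1 ler01 (lexx _)).
  by rewrite subrr scale0r scale1r addr0.
move=> t x t0 Gx; have [m Hm] := exists_pow2 t; exact: Gsc Hm.
Qed.

Lemma cone_comb (R : realType) (n k : nat) (G : set 'rV[R]_n) (c : 'I_k -> R) (w : 'I_k -> 'rV[R]_n) :
  convex_cone G -> (forall i, 0 <= c i) -> (forall i, G (w i)) -> G (\sum_(i < k) c i *: w i).
Proof.
move=> [G0 [GD GZ]] c0 Gw.
elim/big_rec: _ => // i x _ Gx; apply: GD => //; exact: GZ.
Qed.

Lemma face_trans (R : realType) (n : nat) (C E G : set 'rV[R]_n) :
  is_face C E -> is_face E G -> is_face C G.
Proof.
move=> [EC [_ [_ midE]]] [GE [G0 [cvG midG]]].
split; first by move=> x /GE /EC.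
split => //; split => // x y Cx Cy Gm t t0 t1.
have Ex : E x.
  have := midE x y Cx Cy (GE _ Gm) 1 ler01 (lexx _).
  by rewrite subrr scale0r scale1r addr0.
have Ey : E y.
  have := midE x y Cx Cy (GE _ Gm) 0 (lexx _) ler01.
  by rewrite subr0 scale0r scale1r add0r.
exact: midG.
Qed.

Lemma face_exposed (R : realType) (n : nat) (C E : set 'rV[R]_n) (e : 'rV[R]_n) :
  convex_cone C -> is_face C E -> (forall z, E z -> 0 <= dot e z) ->
  is_face C (E `&` [set z | dot e z = 0]).
Proof.
move=> cC fE ege.
have [E0 _] := face_cone cC fE.
have [EC [_ [cvE midE]]] := fE.
split; first by move=> x [/EC].
split; first by exists 0; split => //=; rewrite dot0r.
split.
  move=> x y t [Ex ex] [Ey ey] t0 t1; split; first exact: cvE.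
  by rewrite /= dotDr !dotZr ex ey !mulr0 addr0.
move=> x y Cx Cy [Em em] t t0 t1; split; first exact: midE.
have Ex : E x.
  have := midE x y Cx Cy Em 1 ler01 (lexx _).
  by rewrite subrr scale0r scale1r addr0.
have Ey : E y.
  have := midE x y Cx Cy Em 0 (lexx _) ler01.
  by rewrite subr0 scale0r scale1r add0r.
move: em; rewrite /= dotZr dotDr => /eqP; rewrite mulf_eq0 invr_eq0 pnatr_eq0 /=.
move=> /eqP exy.
have hx := ege _ Ex; have hy := ege _ Ey.
have ex0 : dot e x = 0 by apply/le_anti; rewrite hx andbT -exy lerDl.
have ey0 : dot e y = 0 by move: exy; rewrite ex0 add0r.
by rewrite /= dotDr !dotZr ex0 ey0 !mulr0 addr0.
Qed.

Lemma face_span (R : realType) (n k : nat) (C G : set 'rV[R]_n) (A : 'M[R]_(k, n)) z :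
  convex_cone C -> is_face C G -> (forall i, G (row i A)) -> C z -> (z <= A)%MS -> G z.
Proof.
move=> cC fG rA Cz /submxP [c zE].
have cG := face_cone cC fG.
have [C0 [CD CZ]] := cC.
have [GC [_ [_ mid]]] := fG.
set S := \sum_(i < k) `|c 0 i|.
have S0 : 0 <= S by apply: sumr_ge0 => i _.
set s := (1 + S)^-1.
have s0 : 0 < s by rewrite invr_gt0 ltr_wpDr.
have sc : forall i, s * `|c 0 i| <= 1.
  move=> i; rewrite mulrC ler_pdivrMr ?ltr_wpDr // mul1r.
  have : `|c 0 i| <= S by rewrite /S (bigD1 i) //= lerDl sumr_ge0.
  by move=> h; lra.
have ->  : z = \sum_i c 0 i *: row i A by rewrite zE mulmx_sum_row.
set g0 := \sum_(i < k) 1 *: row i A.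
have Gg0 : G g0 by apply: cone_comb.
have Gq : G (g0 - s *: \sum_i c 0 i *: row i A).
  have -> : g0 - s *: \sum_i c 0 i *: row i A = \sum_(i < k) (1 - s * c 0 i) *: row i A.
    rewrite /g0 scaler_sumr -sumrB; apply: eq_bigr => i _.
    by rewrite scalerBl scalerA.
  apply: cone_comb => // i; rewrite subr_ge0.
  by apply: le_trans (sc i); rewrite ler_pM2l // ler_norm.
have Cx : C (s *: \sum_i c 0 i *: row i A).
  by apply: CZ; [exact: ltW | rewrite -mulmx_sum_row -zE].
have hm : G (2^-1 *: (s *: \sum_i c 0 i *: row i A + (g0 - s *: \sum_i c 0 i *: row i A))).
  by rewrite addrC subrK; have [_ [_ ]] := cG; apply => //; rewrite invr_ge0 ler0n.
have := mid _ _ Cx (GC _ Gq) hm 1 ler01 (lexx _).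
rewrite subrr scale0r addr0 scale1r => Gx.
have [_ [_ GZ]] := cG.
have := GZ (s^-1) _ _ Gx; rewrite scalerA mulVf ?gt_eqF // scale1r; apply.
by rewrite invr_ge0 ltW.
Qed.

Lemma face_eqdim (R : realType) (n : nat) (C G H : set 'rV[R]_n) :
  convex_cone C -> is_face C G -> H `<=` C -> G `<=` H -> dimS G = dimS H -> H `<=` G.
Proof.
move=> cC fG HC GH dGH z Hz.
have [A [rA [rkA GA]]] := dimS_spec G.
have [B [rB [rkB HB]]] := dimS_spec H.
have AB : (A <= B)%MS by apply/row_subP => i; apply: HB; apply: GH.
have [_ eq] := mxrank_leqif_eq AB.
have : (A == B)%MS by rewrite -eq rkA rkB dGH.
move=> /andP [_ BA].
apply: (face_span cC fG rA (HC _ Hz)).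
exact: submx_trans (HB _ Hz) BA.
Qed.

Lemma dims_between (R : realType) (n : nat) (C : set 'rV[R]_n) (i m : nat) :
  (i.+1 < size (face_dims C))%N -> (exists G, is_face C G /\ dimS G = m) ->
  (ndim C i <= m)%N -> (m <= ndim C i.+1)%N -> m = ndim C i \/ m = ndim C i.+1.
Proof.
move=> isz exG l1 l2.
set s := face_dims C.
have ss : sorted ltn s by apply: sorted_filter; [exact: ltn_trans | exact: iota_ltn_sorted].
have ms : m \in s.
  rewrite mem_filter mem_iota add0n ltnS; apply/andP; split; first exact/asboolP.
  by case: exG => G [_ <-]; exact: dimS_le_n.
have pl := index_mem m s; rewrite ms in pl.
have nm := nth_index 0%N ms.
set p := index m s in pl nm.
have hom := sorted_ltn_nth ltn_trans 0%N ss.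
have isz' : (i < size s)%N by exact: ltnW.
case: (ltngtP p i) => [pi|ip|pe]; last by left; rewrite -nm pe.
  have := hom p i pl isz' pi; rewrite nm /ndim -/s => h.
  by move: l1; rewrite /ndim -/s leqNgt h.
case: (ltngtP p i.+1) => [pi1|ip1|pe]; last by right; rewrite -nm pe.
  by move: pi1; rewrite ltnS leqNgt ip.
have := hom i.+1 p isz pl ip1; rewrite nm /ndim -/s => h.
by move: l2; rewrite /ndim -/s leqNgt h.
Qed.

Definition evalid (R : realType) (n : nat) (E G : set 'rV[R]_n) (x : 'rV[R]_n) : Prop :=
  dot x x = 1 /\ forall y, (perp G y /\ dualspan E y) <-> exists t : R, 0 <= t /\ y = t *: x.

Lemma eF_cases (R : realType) (n : nat) (E G : set 'rV[R]_n) :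
  evalid E G (eF E G) \/ eF E G = 0.
Proof.
case: (pselect (exists x, evalid E G x)) => [ex|nex].
  by left; exact: (xgetPex 0 ex).
by right; apply: xgetPN => x hx; apply: nex; exists x.
Qed.

Lemma evalid_props (R : realType) (n : nat) (E G : set 'rV[R]_n) x :
  evalid E G x -> perp G x /\ Defs.dual E x /\ Defs.span E x.
Proof.
move=> [_ H]; have [[p [d s]] _] : (perp G x /\ dualspan E x) /\ True.
  by split => //; apply/H; exists 1; rewrite scale1r.
by [].
Qed.

Lemma span_perp_self (R : realType) (n : nat) (E : set 'rV[R]_n) e :
  Defs.span E e -> (forall z, E z -> dot e z = 0) -> dot e e = 0.
Proof.
move=> [k [c [w [Ew ->]]]] H.
by rewrite dot_suml big1 // => i _; rewrite dotC H ?mulr0.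
Qed.

Lemma exposed_eq (R : realType) (n : nat) (C E F : set 'rV[R]_n) (j : nat) e :
  convex_cone C -> (1 <= j)%N -> (j <= dd C)%N -> calP C j (E, F) -> evalid E F e ->
  forall z, E z -> dot e z = 0 -> F z.
Proof.
move=> cC j1 jd [[fE dE] [[fF dF] FE]] ev.
have [pe [de se]] := evalid_props ev.
have [e1 _] := ev.
simpl in *.
set F' := E `&` [set z | dot e z = 0].
have fF' : is_face C F' by apply: face_exposed => // z Ez; exact: de.
have FF' : F `<=` F' by move=> z Fz; split; [exact: FE | rewrite /=; exact: pe].
have F'E : F' `<=` E by move=> z [].
have EC : E `<=` C by case: fE.
have F'C : F' `<=` C by case: fF'.
set i := (dd C - j)%N.
have dEi : dimS E = ndim C i.+1.
  by rewrite dE; congr ndim; rewrite /i; lia.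
have isz : (i.+1 < size (face_dims C))%N.
  move: jd; rewrite /i /dd; case: (size (face_dims C)) => [|sz] /=; lia.
have := dims_between isz (ex_intro _ F' (conj fF' erefl)).
rewrite -dF -dEi (dimS_le FF') (dimS_le F'E) => /(_ isT isT) [eqF|eqE].
  move=> z Ez ez; apply: (face_eqdim cC fF F'C FF' (esym eqF)); by split.
have EF' := face_eqdim cC fF' EC F'E eqE.
have := span_perp_self se (fun z Ez => (EF' z Ez).2); rewrite e1 => h.
by exfalso; move: h; apply/eqP; rewrite oner_eq0.
Qed.

Lemma ballnE (R : realType) (n : nat) (a v : 'rV[R]_n) r : ball a r v <-> `|a - v| < r.
Proof. by rewrite -ball_normE. Qed.

Lemma fell_open_meet (R : realType) (n : nat) (U : set 'rV[R]_n) :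
  open U -> fell_open [set B | B `&` U !=set0].
Proof.
move=> oU A HA; exists 1%N, (fun=> [set B | B `&` U !=set0]); split.
  by move=> _; right; exists U.
by split => // B /(_ ord0).
Qed.

Lemma fell_open0 (R : realType) (n : nat) : fell_open (@set0 (set 'rV[R]_n)).
Proof. by move=> A []. Qed.

Lemma small_pos (R : realType) (M c : R) : 0 <= M -> 0 < c ->
  exists r, 0 < r /\ r <= 1 /\ M * r <= c.
Proof.
move=> M0 c0; exists (Num.min 1 (c / (M + 1))); split; first by rewrite lt_min ltr01 divr_gt0 // ltr_wpDl.
split; first by rewrite ge_min lexx.
have h1 : M * Num.min 1 (c / (M + 1)) <= M * (c / (M + 1)) by rewrite ler_wpM2l // ge_min lexx orbT.
apply: le_trans h1 _; rewrite mulrA ler_pdivrMr ?ltr_wpDl //.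
nra.
Qed.

Lemma dot_diff_bound (R : realType) (n : nat) (x e v a : 'rV[R]_n) :
  `|dot x v - dot e a| <= n%:R * (`|x - e| * `|v|) + n%:R * (`|e| * `|v - a|).
Proof.
have -> : dot x v - dot e a = dot (x - e) v + dot e (v - a).
  by rewrite dotBl dotBr addrA subrK.
by apply: (le_trans (ler_normD _ _)); apply: lerD; exact: dot_abs_le.
Qed.

Lemma nonzero_nbhs (R : realType) (n : nat) (e a : 'rV[R]_n) : 0 < dot e a ->
  exists r delta, 0 < r /\ 0 < delta /\
    forall x v, `|x - e| < delta -> `|a - v| < r -> 0 < dot x v.
Proof.
move=> c0; set c := dot e a in c0 *.
have [r [r0 [r1 hr]]] := small_pos (M := n%:R * `|e|) (c := c / 4) (mulr_ge0 (ler0n _ _) (normr_ge0 _)) (divr_gt0 c0 (ltr0n _ 4)).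
have [d [d0 [d1 hd]]] := small_pos (M := n%:R * (`|a| + 1)) (c := c / 4) (mulr_ge0 (ler0n _ _) (addr_ge0 (normr_ge0 _) ler01)) (divr_gt0 c0 (ltr0n _ 4)).
exists r, d; split => //; split => // x v hx hv.
have hv' : `|v| <= `|a| + 1.
  have : `|v| <= `|a| + `|v - a|.
    by rewrite -{1}(subrK a v) (le_trans (ler_normD _ _)) // addrC.
  by rewrite distrC in hv; move=> h; apply: (le_trans h); rewrite lerD2l (le_trans (ltW hv)).
have B := dot_diff_bound x e v a.
have B1 : n%:R * (`|x - e| * `|v|) <= c / 4.
  apply: le_trans hd; rewrite -mulrA ler_wpM2l ?ler0n // mulrC.
  by rewrite ler_pM // ltW.
have B2 : n%:R * (`|e| * `|v - a|) <= c / 4.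
  apply: le_trans hr; rewrite mulrA ler_wpM2l ?mulr_ge0 ?ler0n //.
  by rewrite distrC ltW.
have : `|dot x v - c| < c by apply: (le_lt_trans B); lra.
rewrite ltr_norml => /andP [h _]; lra.
Qed.

Lemma nonzero_nbhs2 (R : realType) (n : nat) (a w : 'rV[R]_n) : dot a w != 0 ->
  exists r, 0 < r /\ forall v, `|a - v| < r -> dot v w != 0.
Proof.
move=> nz; set c := `|dot a w|.
have c0 : 0 < c by rewrite normr_gt0.
have [r [r0 [_ hr]]] := small_pos (M := n%:R * `|w|) (c := c / 2) (mulr_ge0 (ler0n _ _) (normr_ge0 _)) (divr_gt0 c0 (ltr0n _ 2)).
exists r; split => // v hv; apply/negP => /eqP h0.
have : `|dot (a - v) w| <= n%:R * (`|a - v| * `|w|) by exact: dot_abs_le.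
rewrite dotBl h0 subr0 -/c => h.
have : n%:R * (`|a - v| * `|w|) <= c / 2.
  apply: le_trans hr; rewrite -mulrA ler_wpM2l ?ler0n // mulrC ler_wpM2l //.
  exact: ltW.
lra.
Qed.

Definition badG (R : realType) (n : nat) (C E : set 'rV[R]_n) (j : nat) (e f0 : 'rV[R]_n)
  (eps delta : R) (G : set 'rV[R]_n) : Prop :=
  calP C j (E, G) /\ evalid E G (eF E G) /\ `|eF E G - e| < delta /\
  forall g, G g -> ~ ball f0 eps g.

Lemma claimQ (R : realType) (n : nat) (C E F : set 'rV[R]_n) (j : nat) e :
  convex_cone C -> fell_compact (Pj C j) -> (1 <= j)%N -> (j <= dd C)%N ->
  calP C j (E, F) -> evalid E F e ->
  forall f0, F f0 -> forall eps, 0 < eps -> exists delta, 0 < delta /\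
    forall G, ~ badG C E j e f0 eps delta G.
Proof.
move=> cC fc j1 jd cEF ev f0 Ff0 eps eps0.
have [[fE dE] [[fF dF] FE]] := cEF.
have [pe [de se]] := evalid_props ev.
have EC : E `<=` C by case: fE.
have FC : F `<=` C by case: fF.
have key : forall A, exists p : set (set 'rV[R]_n) * R, fell_open p.1 /\ 0 < p.2 /\
    (Pj C j A -> p.1 A) /\ forall G, badG C E j e f0 eps p.2 G -> ~ p.1 G.
  move=> A; case: (pselect (Pj C j A)) => [[fA dA]|nA]; last first.
    exists (set0, 1); split; first exact: fell_open0.
    by split => //; split => // G _ [].
  case: (pselect (exists a, A a /\ ball f0 eps a)) => [[a [Aa ba]]|nb].
    exists ([set B | B `&` ball f0 eps !=set0], 1); split; first exact/fell_open_meet/ball_open.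
    split => //; split; first by move=> _; exists a.
    by move=> G [_ [_ [_ Gf]]] [g [Gg bg]]; exact: (Gf g Gg bg).
  have nFA : ~ (A `<=` F).
    move=> AF; have FA : F `<=` A.
      apply: (face_eqdim cC fA FC AF); rewrite dA dF //.
    by apply: nb; exists f0; split; [exact: FA | exact: ballxx].
  have [a [Aa nFa]] : exists a, A a /\ ~ F a.
    apply: contrapT => h; apply: nFA => z Az; apply: contrapT => nz; apply: h; by exists z.
  have AC : A `<=` C by case: fA.
  case: (pselect (E a)) => [Ea|nEa].
    have ea : 0 < dot e a.
      rewrite lt_def de // andbT; apply/negP => /eqP ea0.
      by apply: nFa; exact: (exposed_eq cC j1 jd cEF ev Ea ea0).
    have [r [d [r0 [d0 hrd]]]] := nonzero_nbhs ea.
    exists ([set B | B `&` ball a r !=set0], d); split; first exact/fell_open_meet/ball_open.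
    split => //; split; first by move=> _; exists a; split => //; exact: ballxx.
    move=> G [_ [vG [dG _]]] [g [Gg bg]].
    have [pG _] := evalid_props vG.
    have := hrd _ _ dG (proj1 (ballnE _ _ _) bg).
    by rewrite (pG g Gg) ltxx.
  have [A0 [rA [rkA EA]]] := dimS_spec E.
  have naA : ~~ (a <= A0)%MS.
    by apply/negP => aA; apply: nEa; exact: (face_span cC fE rA (AC _ Aa) aA).
  move: naA; rewrite submxE => /negP naA.
  have [l hl] : exists l, (a *m cokermx A0) 0 l != 0.
    apply: contrapT => h; apply: naA; apply/eqP/rowP => l; rewrite [RHS]mxE.
    by apply: contrapT => hl; apply: h; exists l; apply/eqP.
  set w := (col l (cokermx A0))^T.
  have dw : forall v, dot v w = (v *m cokermx A0) 0 l.
    by move=> v; rewrite dotE !mxE; apply: eq_bigr => jj _; rewrite !mxE.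
  have [r [r0 hr]] := nonzero_nbhs2 (w := w) (a := a) ltac:(by rewrite dw).
  exists ([set B | B `&` ball a r !=set0], 1); split; first exact/fell_open_meet/ball_open.
  split => //; split; first by move=> _; exists a; split => //; exact: ballxx.
  move=> G [[_ [_ GE]] _] [g [Gg bg]].
  have := hr _ (proj1 (ballnE _ _ _) bg); rewrite dw.
  by have := EA _ (GE _ Gg); rewrite submxE => /eqP ->; rewrite mxE eqxx.
have [f hf] := choice key.
have [k [h cov]] := fc (set 'rV[R]_n) (fun A => (f A).1) (fun A => (hf A).1)
  (fun A PA => ex_intro (fun i => (f i).1 A) A ((hf A).2.2.1 PA)).
set delta := \big[Order.min/1]_(m < k) (f (h m)).2.
have d0 : 0 < delta.
  by apply: (big_ind (fun x => 0 < x)) => // [x y hx hy|m _]; [rewrite lt_min hx hy | exact: (hf (h m)).2.1].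
exists delta; split => // G [cG [vG [dG Gf]]].
have [m hm] := cov G cG.2.1.
apply: ((hf (h m)).2.2.2 G) hm; split => //; split => //; split => //.
by apply: lt_le_trans dG _; exact: bigmin_le.
Qed.

Lemma sphere_compact (R : realType) (n : nat) : compact [set v : 'rV[R]_n | dot v v = 1].
Proof.
apply: bounded_closed_compact.
  exists 1; split => // M M1 x Sx /=.
  by apply: le_trans (dot1_norm Sx) (ltW M1).
have -> : [set v : 'rV[R]_n | dot v v = 1] = (fun v => dot v v) @^-1` [set 1] by [].
by apply: preimage_closed; [move=> x _; exact: dot_cont2 | exact: closed_eq].
Qed.

Lemma cluster_le (R : realType) (n : nat) (u : nat -> 'rV[R]_n) (uu : 'rV[R]_n)
  (f : 'rV[R]_n -> R) :
  continuous f -> cluster (u @ \oo) uu ->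
  (forall eta, 0 < eta -> \forall i \near \oo, f (u i) <= eta) -> f uu <= 0.
Proof.
move=> cf cl H; rewrite leNgt; apply/negP => fpos.
set eta := f uu / 2.
have eta0 : 0 < eta by rewrite divr_gt0.
have nb : nbhs uu (f @^-1` ball (f uu) eta).
  exact: (cf uu (ball (f uu) eta) (nbhsx_ballx _ _ eta0)).
have [v [Av Bv]] := cl [set v | f v <= eta] _ (H eta eta0) nb.
move: Av Bv => /= Av; rewrite -ball_normE /= ltr_distlC => /andP [h _].
rewrite /eta in h Av; lra.
Qed.

Lemma Ehalf_mx (R : realType) (n : nat) (E F : set 'rV[R]_n) :
  exists M : 'M[R]_n, forall v, Ehalf E F v <-> (v <= M)%MS.
Proof.
have [AE [rE [_ EA]]] := dimS_spec E.
have [AF [rF [_ FA]]] := dimS_spec F.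
exists (AE :&: (kermx AF^T :&: kermx (eF E F)^T))%MS => v.
rewrite !sub_capmx !sub_kermx; split.
  move=> [sE [pF de]]; apply/and3P; split.
  - exact/(span_mx rE EA).
  - by apply/eqP; apply/(perp_mx rF FA).
  - by apply/eqP/rowP => i; rewrite (ord1 i) [RHS]mxE -dot_mx.
move=> /and3P [h1 /eqP h2 /eqP h3]; split; first exact/(span_mx rE EA).
split; first exact/(perp_mx rF FA).
by rewrite dot_mx h3 mxE.
Qed.

Lemma dotNr (R : realType) (n : nat) (u w : 'rV[R]_n) : dot w (- u) = - dot w u.
Proof. by rewrite dotC dotNl dotC. Qed.

Lemma cluster_eq0 (R : realType) (n : nat) (u : nat -> 'rV[R]_n) (uu w : 'rV[R]_n) :
  cluster (u @ \oo) uu ->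
  (forall eta, 0 < eta -> \forall i \near \oo, `|dot (u i) w| <= eta) -> dot uu w = 0.
Proof.
move=> cl H; apply/le_anti/andP; split.
  apply: (@cluster_le R n u uu (fun v => dot v w) (@dot_cont _ _ w) cl) => eta eta0.
  by apply: filterS (H eta eta0) => i h; exact: le_trans (ler_norm _) h.
rewrite -oppr_le0 -dotNr; apply: (@cluster_le R n u uu (fun v => dot v (- w)) (@dot_cont _ _ (- w)) cl) => eta eta0.
apply: filterS (H eta eta0) => i h; rewrite dotNr.
by apply: le_trans h; rewrite -normrN ler_norm.
Qed.

Lemma ev_small (R : realType) (a c : R) : 0 < c ->
  \forall i \near \oo, a / i.+1%:R < c.
Proof.
move=> c0; exists (Num.trunc (a / c)) => // i /= hi.
rewrite ltr_pdivrMr // mulrC -ltr_pdivrMr //.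
apply: lt_le_trans (truncnS_gt _) _; rewrite ler_nat ltnS //.
Qed.

Lemma u_unit (R : realType) (n : nat) (d : 'rV[R]_n) : d != 0 ->
  dot ((Num.sqrt (dot d d))^-1 *: d) ((Num.sqrt (dot d d))^-1 *: d) = 1.
Proof.
move=> dn0.
have D0 : 0 < dot d d.
  rewrite lt_def dot_ge0 andbT; apply/negP => /eqP h; move/negP: dn0; apply.
  by apply/eqP; exact: dot_eq0.
rewrite dotZl dotZr mulrA -expr2 exprVn sqr_sqrtr ?ltW // mulVf //.
by rewrite gt_eqF.
Qed.

Lemma trivial_case (R : realType) (n : nat) (C E F : set 'rV[R]_n) (j : nat) :
  eF E F = 0 ->
  exists U : set 'rV[R]_n, nbhs (eF E F) U /\
    forall x y, U x -> eset C j E x -> U y -> eset C j E y ->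
      oproj (Ehalf E F) x = oproj (Ehalf E F) y -> x = y.
Proof.
move=> e0; set r : R := (n.+1%:R)^-1.
have r0 : 0 < r by rewrite invr_gt0 ltr0n.
exists (ball (eF E F) r); split; first exact: nbhsx_ballx.
have cl : forall x, ball (eF E F) r x -> eset C j E x -> x = 0.
  move=> x bx [G cG xG]; case: (eF_cases E G) => [[x1 _]|h0] ; last by rewrite -xG h0.
  rewrite xG in x1.
  exfalso; move: bx; rewrite e0 => /ballnE; rewrite sub0r normrN => hx.
  have h1 := dot_le_norm x; rewrite x1 in h1.
  have hr1 : r <= 1 by rewrite invf_le1 ?ler1n ?ltr0n.
  have hNr : n%:R * r < 1 by rewrite ltr_pdivrMr ?ltr0n // mul1r ltr_nat.
  move: h1 hx (normr_ge0 x); rewrite expr2; move: (`|x|) => a h1 hx h2.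
  move: hr1 hNr h1 hx h2; move: (r) (n%:R : R) => rr N; clear; move=> *; nra.
by move=> x y Ux Ex Uy Ey _; rewrite (cl x) // (cl y).
Qed.

Lemma main_case (R : realType) (n : nat) (C E F : set 'rV[R]_n) (j : nat) :
  convex_cone C -> fell_compact (Pj C j) -> (1 <= j)%N -> (j <= dd C)%N ->
  calP C j (E, F) -> evalid E F (eF E F) ->
  exists U : set 'rV[R]_n, nbhs (eF E F) U /\
    forall x y, U x -> eset C j E x -> U y -> eset C j E y ->
      oproj (Ehalf E F) x = oproj (Ehalf E F) y -> x = y.
Proof.
move=> cC fc j1 jd cEF ev.
set e := eF E F.
have [pe [de se]] := evalid_props ev.
have [e1 _] := ev.
rewrite -/e in pe de se e1.
have en0 : e != 0.
  apply/eqP => h; have := e1; rewrite -/e h dot0l => /eqP; by rewrite eq_sym oner_eq0.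
have r0 : 0 < `|e| by rewrite normr_gt0.
set K : R := n%:R.
have K0 : 0 <= K by rewrite ler0n.
apply: contrapT => Hn.
set del := fun i : nat => `|e| / i.+1%:R.
have del0 : forall i, 0 < del i by move=> i; rewrite divr_gt0.
have delle : forall i, del i <= `|e|.
  by move=> i; rewrite ler_pdivrMr ?ltr0n // ler_peMr // ler1n.
have Hbad : forall i : nat, exists xy : 'rV[R]_n * 'rV[R]_n,
    `|e - xy.1| < del i /\ eset C j E xy.1 /\ `|e - xy.2| < del i /\ eset C j E xy.2 /\
    oproj (Ehalf E F) xy.1 = oproj (Ehalf E F) xy.2 /\ xy.1 <> xy.2.
  move=> i; apply: contrapT => nx; apply: Hn.
  exists (ball e (del i)); split; first exact: nbhsx_ballx.
  move=> x y Ux Ex Uy Ey pxy; apply: contrapT => nxy; apply: nx; exists (x, y).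
  by split; [exact/ballnE|split => //; split; [exact/ballnE|]].
have [XY hXY] := choice Hbad.
set X := fun i => (XY i).1.
set Y := fun i => (XY i).2.
have valid_of : forall i x, `|e - x| < del i -> eset C j E x ->
    exists G, calP C j (E, G) /\ evalid E G x /\ eF E G = x.
  move=> i x hx [G cG xG]; exists G; split => //; split => //.
  case: (eF_cases E G) => [|h0]; first by rewrite xG.
  exfalso; move: hx; rewrite -xG h0 subr0 => hx.
  by have := lt_le_trans hx (delle i); rewrite ltxx.
set d := fun i => X i - Y i.
have dn0 : forall i, d i != 0.
  by move=> i; rewrite subr_eq0; apply/eqP; have [_ [_ [_ [_ [_ h]]]]] := hXY i.
set u := fun i => (Num.sqrt (dot (d i) (d i)))^-1 *: d i.
have u1 : forall i, dot (u i) (u i) = 1 by move=> i; exact: u_unit.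
have un : forall i, `|u i| <= 1 by move=> i; exact: dot1_norm.
have [M HM] := Ehalf_mx E F.
have uE : forall i w, Ehalf E F w -> dot (u i) w = 0.
  move=> i w hw; rewrite /u dotZl.
  have [_ hx] := oproj_spec (X i) HM; have [_ hy] := oproj_spec (Y i) HM.
  have [_ [_ [_ [_ [pxy _]]]]] := hXY i.
  suff -> : dot (d i) w = 0 by rewrite mulr0.
  have -> : d i = (X i - oproj (Ehalf E F) (X i)) - (Y i - oproj (Ehalf E F) (Y i)).
    by rewrite /X /Y pxy opprB addrA subrK.
  by rewrite dotBl hx // hy // subrr.
have [AE [rE [_ EA]]] := dimS_spec E.
have uspan : forall i, (u i <= AE)%MS.
  move=> i; have [hx [ex [hy [ey _]]]] := hXY i.
  have [G [_ [vG xG]]] := valid_of i _ hx ex.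
  have [H [_ [vH yH]]] := valid_of i _ hy ey.
  have [_ [_ sx]] := evalid_props vG; have [_ [_ sy]] := evalid_props vH.
  apply: scalemx_sub; apply: addmx_sub; first exact/(span_mx rE EA).
  by rewrite -scaleN1r; apply: scalemx_sub; exact/(span_mx rE EA).
have ue : forall i, `|dot (u i) e| <= K * del i.
  move=> i; have [hx [_ [hy _]]] := hXY i.
  have [_ [ex [_ [ey _]]]] := hXY i.
  have [G [_ [[x1 _] _]]] := valid_of i _ hx ex.
  have [H [_ [[y1 _] _]]] := valid_of i _ hy ey.
  have s0 : dot (u i) (X i + Y i) = 0.
    rewrite /u dotZl; suff -> : dot (d i) (X i + Y i) = 0 by rewrite mulr0.
    rewrite /d dotBl !dotDr x1 y1 (dotC (Y i) (X i)); lra.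
  have -> : dot (u i) e = 2^-1 * (dot (u i) (e - X i) + dot (u i) (e - Y i)).
    rewrite !dotBr; move: s0; rewrite dotDr; lra.
  have b1 := dot_abs_le (u i) (e - X i); have b2 := dot_abs_le (u i) (e - Y i).
  have ux := un i.
  have hx' : `|e - X i| <= del i by exact: ltW.
  have hy' : `|e - Y i| <= del i by exact: ltW.
  rewrite normrM ger0_norm ?invr_ge0 ?ler0n //.
  have c1 : K * (`|u i| * `|e - X i|) <= K * del i.
    by rewrite ler_wpM2l // -[del i]mul1r ler_pM.
  have c2 : K * (`|u i| * `|e - Y i|) <= K * del i.
    by rewrite ler_wpM2l // -[del i]mul1r ler_pM.
  have := ler_normD (dot (u i) (e - X i)) (dot (u i) (e - Y i)).
  move: b1 b2 c1 c2; rewrite -/K.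
  move: (`|_ + _|) (`|dot (u i) (e - X i)|) (`|dot (u i) (e - Y i)|) (K * (`|u i| * _)) (K * (`|u i| * `|e - Y i|)) (K * del i) => a b c p q t *; lra.
have sge0 : forall i, 0 <= (Num.sqrt (dot (d i) (d i)))^-1.
  by move=> i; rewrite invr_ge0 sqrtr_ge0.
have uG : forall i, exists G, calP C j (E, G) /\ evalid E G (eF E G) /\
    eF E G = X i /\ forall g, G g -> dot (u i) g <= 0.
  move=> i; have [hx [ex [hy [ey _]]]] := hXY i.
  have [G [cG [vG xG]]] := valid_of i _ hx ex.
  have [H [_ [vH yH]]] := valid_of i _ hy ey.
  exists G; split => //; split; first by rewrite xG.
  split => // g Gg.
  have [pG _] := evalid_props vG; have [_ [dY _]] := evalid_props vH.
  have GE : G `<=` E by case: cG => _ [_ ].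
  rewrite /u dotZl /d /X /Y (dotBl _ _ g) (pG g Gg) sub0r mulrN oppr_le0.
  by apply: mulr_ge0 => //; exact: dY (GE _ Gg).
have uH : forall i, exists H, calP C j (E, H) /\ evalid E H (eF E H) /\
    eF E H = Y i /\ forall h, H h -> 0 <= dot (u i) h.
  move=> i; have [hx [ex [hy [ey _]]]] := hXY i.
  have [G [_ [vG xG]]] := valid_of i _ hx ex.
  have [H [cH [vH yH]]] := valid_of i _ hy ey.
  exists H; split => //; split; first by rewrite yH.
  split => // h Hh.
  have [pH _] := evalid_props vH; have [_ [dX _]] := evalid_props vG.
  have HE : H `<=` E by case: cH => _ [_ ].
  rewrite /u dotZl /d /X /Y (dotBl _ _ h) (pH h Hh) subr0.
  by apply: mulr_ge0 => //; exact: dX (HE _ Hh).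
have [uu [Suu cl]] : [set v | dot v v = 1] `&` cluster (u @ \oo) !=set0.
  apply: sphere_compact; by exists 0%N => // i _; exact: u1.
have hEh : forall w, Ehalf E F w -> dot uu w = 0.
  move=> w hw; apply: (cluster_eq0 cl) => eta eta0; apply: nearW => i.
  by rewrite uE // normr0 ltW.
have hspan : (uu <= AE)%MS.
  rewrite submxE; apply/eqP/rowP => l; rewrite [RHS]mxE.
  set w := (col l (cokermx AE))^T.
  have dw : forall v, dot v w = (v *m cokermx AE) 0 l.
    by move=> v; rewrite dotE !mxE; apply: eq_bigr => jj _; rewrite !mxE.
  rewrite -dw; apply: (cluster_eq0 cl) => eta eta0; apply: nearW => i.
  by have := uspan i; rewrite submxE dw => /eqP ->; rewrite mxE normr0 ltW.
have K1 : 0 < K + 1 by lra.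
have he : dot uu e = 0.
  apply: (cluster_eq0 cl) => eta eta0.
  apply: filterS (ev_small `|e| (divr_gt0 eta0 K1)) => i hi.
  apply: le_trans (ue i) _.
  have : (K + 1) * del i < eta by rewrite mulrC -ltr_pdivlMr.
  have := del0 i; move: (del i) => t; nra.
have hf : forall f0, F f0 -> dot uu f0 = 0.
  move=> f0 Ff0; apply: (cluster_eq0 cl) => eta eta0.
  set eps := eta / (K + 1).
  have eps0 : 0 < eps by rewrite divr_gt0.
  have Keps : K * eps <= eta.
    have : eps * (K + 1) = eta by rewrite /eps mulfVK ?gt_eqF.
    move: eps0; move: (eps) => t; nra.
  have [d0 [d00 hd0]] := claimQ cC fc j1 jd cEF ev Ff0 eps0.
  apply: filterS (ev_small `|e| d00) => i hi.
  have getg : forall G, calP C j (E, G) -> evalid E G (eF E G) -> `|eF E G - e| < d0 ->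
      exists g, G g /\ `|f0 - g| < eps.
    move=> G cG vG dG; apply: contrapT => ng; apply: (hd0 G); split => //; split => //.
    split => // g Gg /ballnE bg; apply: ng; by exists g.
  have bnd : forall g, `|f0 - g| < eps -> `|dot (u i) (f0 - g)| <= eta.
    move=> g hg; apply: le_trans (dot_abs_le _ _) _; apply: le_trans Keps.
    by rewrite ler_wpM2l // -[eps]mul1r ler_pM // ltW.
  have [hx [_ [hy _]]] := hXY i.
  have [G [cG [vG [xG hG]]]] := uG i.
  have [H [cH [vH [yH hH]]]] := uH i.
  have [g [Gg bg]] : exists g, G g /\ `|f0 - g| < eps.
    apply: getg => //; rewrite xG distrC; exact: lt_trans hx hi.
  have [h [Hh bh]] : exists h, H h /\ `|f0 - h| < eps.
    apply: getg => //; rewrite yH distrC; exact: lt_trans hy hi.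
  have e1' := bnd g bg; have e2' := bnd h bh.
  have g0 := hG g Gg; have h0 := hH h Hh.
  rewrite dotBr in e1'; rewrite dotBr in e2'.
  rewrite ler_norml; rewrite ler_norml in e1'; rewrite ler_norml in e2'.
  move: e1' e2' g0 h0; move: (dot (u i) f0) (dot (u i) g) (dot (u i) h) => a b c.
  move=> /andP [p1 p2] /andP [q1 q2] *; apply/andP; split; lra.
have Eu : Ehalf E F uu.
  split; first exact/(span_mx rE EA).
  by split => //; move=> a Fa; exact: hf.
by move: (hEh uu Eu); rewrite Suu => /eqP; rewrite oner_eq0.
Qed.
Unset Implicit Arguments.
Set Strict Implicit.

Theorem mainTheorem14 (R : realType) (n : nat) (Omega : set 'rV[R]_n) :
  convex_cone Omega -> pointed_set Omega -> solid Omega -> closed Omega ->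
  facially_compact (dual Omega) -> locally_smooth (dual Omega) ->
  forall j : nat, (1 <= j)%N -> (j <= dd (dual Omega))%N ->
  forall E F : set 'rV[R]_n, calP (dual Omega) j (E, F) ->
  exists U : set 'rV[R]_n, nbhs (eF E F) U /\
    forall x y, U x -> eset (dual Omega) j E x -> U y -> eset (dual Omega) j E y ->
      oproj (Ehalf E F) x = oproj (Ehalf E F) y -> x = y.
Proof.
move=> _ _ _ _ fcomp _ j j1 jd E F cEF.
case: (eF_cases E F) => [ev|e0]; last exact: trivial_case.
exact: (main_case (dual_cone Omega) (fcomp j jd) j1 jd cEF ev).
Qed.
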